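(* Let $D$ be a finite directed graph with $n$ vertices having two distinct complete sources $c$ and $c'$. Let $\mathcal{T}_c$ be the set of spanning rooted directed trees $T$ of $D$ (subgraphs of $D$ containing all vertices) in which $c$ is a leaf. For $T\in\mathcal{T}_c$ let $S_T$ be the subcomplex defined below. Then $S_T\subseteq\Delta(D)$ for each $T\in\mathcal{T}_c$ and $$\Delta(D)=\bigcup_{T\in\mathcal{T}_c}S_T .$$ Definition of $S_T$: let $x_1$ be the root of $T$ and $x_1\to x_2\to\cdots\to x_k\to c$ the unique directed path in $T$ from $x_1$ to $c$; let $\sigma_T=\{\overrightarrow{x_1x_2},\ldots,\overrightarrow{x_{k-1}x_k},\overrightarrow{x_kc},\overrightarrow{cx_1}\}$ and let $\partial\sigma_T$ be the complex of all proper subsets of $\sigma_T$. Let $y_1,\ldots,y_r$ ($r=n-k-1$) be the remaining vertices of $D$, and for each $j$ let $z_j$ be the unique vertex with $\overrightarrow{z_jy_j}\in E(T)$. Then $$S_T=\partial\sigma_T*\{\overrightarrow{z_1y_1},\overrightarrow{cy_1}\}*\cdots*\{\overrightarrow{z_ry_r},\overrightarrow{cy_r}\},$$ where $*$ is the join of simplicial complexes and $\{a,b\}$ denotes the $0$-dimensional complex with the two vertices $a,b$ and no edge.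
   Context: For a finite directed graph $D$ (no loops, no multiple edges), the complex of directed trees $\Delta(D)$ has the directed edges of $D$ as vertices, and its faces are the edge sets of directed forests in $D$ (vertex-disjoint unions of rooted directed trees; equivalently, edge sets in which every vertex has in-degree at most $1$ and there is no directed cycle). A rooted directed tree with root $r$ is an acyclic digraph in which each vertex is reached from $r$ by a unique directed path; a leaf is a vertex of out-degree $0$ in the tree. A vertex $c$ of $D$ is a complete source if $\overrightarrow{cy}\in E(D)$ for every vertex $y\neq c$. We write $\overrightarrow{xy}$ for the directed edge from $x$ to $y$. *)

(* Defs.v *)
From mathcomp Require Import all_boot.
Set Implicit Arguments. Unset Strict Implicit. Unset Printing Implicit Defensive.

Section Digraph.
Variable V : finType.

(* A directed graph on V is D : rel V (edge x -> y iff D x y);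
   edge sets are finite sets of ordered pairs (x, y) meaning x -> y. *)
Definition edges (D : rel V) : {set V * V} := [set e | D e.1 e.2].

Definition erel (F : {set V * V}) : rel V := fun a b => (a, b) \in F.

Definition has_dcycle (F : {set V * V}) : Prop :=
  exists (x : V) (p : seq V), p != [::] /\ path (erel F) x p /\ last x p = x.

(* Faces of the complex of directed trees Delta(D): directed forests. *)
Definition directed_forest (D : rel V) (F : {set V * V}) : Prop :=
  F \subset edges D /\
  (forall y : V, #|[set e in F | e.2 == y]| <= 1) /\
  ~ has_dcycle F.

Definition dpath (F : {set V * V}) (r : V) (p : seq V) (v : V) : Prop :=
  path (erel F) r p /\ uniq (r :: p) /\ last r p = v.

Definition spanning_rooted_tree (D : rel V) (T : {set V * V}) (r : V) : Prop :=
  T \subset edges D /\ ~ has_dcycle T /\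
  forall v : V, exists p, dpath T r p v /\ forall q, dpath T r q v -> q = p.

Definition is_leaf (T : {set V * V}) (c : V) : Prop :=
  forall y : V, (c, y) \notin T.

Definition complete_source (D : rel V) (c : V) : Prop :=
  forall y : V, y != c -> D c y.

(* sigma_T for the path r = x_1 -> x_2 -> ... -> x_k -> c (given by r :: p,
   whose last vertex is c): the path edges together with the edge c -> x_1. *)
Definition sigmaT (r : V) (p : seq V) (c : V) : {set V * V} :=
  [set e | e \in zip (r :: p) p] :|: [set (c, r)].

(* Faces of S_T = (boundary of sigma_T) * {z_1y_1, cy_1} * ... * {z_ry_r, cy_r}:
   a proper subset of sigma_T, together with, for each vertex y off the path,
   either nothing, or the tree edge z_y -> y, or the edge c -> y. *)
Definition S_face (T : {set V * V}) (r : V) (p : seq V) (c : V)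
    (F : {set V * V}) : Prop :=
  exists A : {set V * V}, A \proper sigmaT r p c /\
  exists b : V -> option bool,
    F = A :|: [set e : V * V | (e.2 \notin r :: p) &&
                 match b e.2 with
                 | Some true => e \in T
                 | Some false => e.1 == c
                 | None => false
                 end].

End Digraph.

(* Main.v *)
Require Import Defs.
From mathcomp Require Import all_boot zify.
Set Implicit Arguments. Unset Strict Implicit. Unset Printing Implicit Defensive.

Section Gen.
Variable V : finType.
Implicit Types (E F T : {set V * V}) (u v w x y : V).

Lemma sub_dcycle E1 E2 : E1 \subset E2 -> has_dcycle E1 -> has_dcycle E2.
Proof.
move=> /subsetP sE [x [p [p0 [pp lp]]]]; exists x, p; split=> //; split=> //.
by apply: sub_path pp => a b; rewrite /erel => /sE.
Qed.

Lemma cycle_of_connect E u v : connect (erel E) v u -> (u, v) \in E -> has_dcycle E.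
Proof.
move=> /connectP [p pp ->] e; exists v, (rcons p v); split; first by case: p {pp e}.
by rewrite rcons_path pp /= last_rcons.
Qed.

Lemma rank_path E (f : V -> nat) : (forall u v, (u, v) \in E -> f u < f v) ->
  forall p x, path (erel E) x p -> forall w, w \in x :: p -> f w <= f (last x p).
Proof.
move=> hf; elim=> [|y p IH] x /=; first by move=> _ w; rewrite inE => /eqP ->.
move=> /andP [exy py] w; rewrite inE => /orP [/eqP ->|wp].
  have := IH y py y (mem_head _ _); have := hf _ _ exy; lia.
exact: IH.
Qed.

Lemma rank_acyclic E (f : V -> nat) : (forall u v, (u, v) \in E -> f u < f v) ->
  ~ has_dcycle E.
Proof.
move=> hf [x [[|y p] [// _ [/= /andP [exy py] lp]]]].
have := rank_path hf py (mem_head y p); rewrite lp; have := hf _ _ exy; lia.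
Qed.

Definition depth E v := #|[set u | connect (erel E) u v]|.

Lemma depth_gt0 E v : 0 < depth E v.
Proof. by apply/card_gt0P; exists v; rewrite inE connect0. Qed.

Lemma depth_le E v : depth E v <= #|V|.
Proof. exact: max_card. Qed.

Lemma depth_edge E u v : ~ has_dcycle E -> (u, v) \in E -> depth E u < depth E v.
Proof.
move=> ac e; apply: proper_card; apply/properP; split.
  apply/subsetP=> w; rewrite !inE => cw; apply: connect_trans cw _.
  by apply: connect1.
exists v; first by rewrite inE connect0.
by rewrite inE; apply/negP => cv; apply: ac; apply: cycle_of_connect cv e.
Qed.

Definition funin E := forall a a' y, (a, y) \in E -> (a', y) \in E -> a = a'.

Lemma funin_card E : funin E -> forall y, #|[set e in E | e.2 == y]| <= 1.
Proof.
move=> h y; apply/card_le1_eqP => [[a b] [a' b']]; rewrite !inE /=.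
move=> /andP [e /eqP eb] /andP [e' /eqP eb']; subst; by rewrite (h _ _ _ e e').
Qed.

Lemma card_funin E : (forall y, #|[set e in E | e.2 == y]| <= 1) -> funin E.
Proof.
move=> h a a' y e e'; have /card_le1_eqP H := h y.
have := H (a, y) (a', y); rewrite !inE /= e e' eqxx => /(_ isT isT); by case.
Qed.

Lemma sub_funin E1 E2 : E1 \subset E2 -> funin E2 -> funin E1.
Proof. by move=> /subsetP s h a a' y /s e /s e'; apply: h e e'. Qed.

Definition stepE E v := if [pick u | (u, v) \in E] is Some u then u else v.
Definition rootE E v := iter #|V| (stepE E) v.

Section Forest.
Variable E : {set V * V}.
Hypothesis Hf : funin E.
Hypothesis Ha : ~ has_dcycle E.

Lemma fr_step_edge u v : (u, v) \in E -> stepE E v = u.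
Proof.
rewrite /stepE; case: pickP => [u' /= e' e|/(_ u) /= -> //]; exact: Hf e' e.
Qed.

Lemma fr_step_none v : (forall u, (u, v) \notin E) -> stepE E v = v.
Proof. by rewrite /stepE; case: pickP => // u e /(_ u); rewrite e. Qed.

Lemma fr_iter_none v k : (forall u, (u, v) \notin E) -> iter k (stepE E) v = v.
Proof. by move=> h; elim: k => //= k ->; rewrite fr_step_none. Qed.

Lemma fr_step_cases v : (stepE E v, v) \in E \/ ((forall u, (u, v) \notin E) /\ stepE E v = v).
Proof.
rewrite /stepE; case: pickP => [u /= e|h]; first by left.
by right; split=> // u; rewrite h.
Qed.

Lemma fr_iter_root k v : depth E v <= k.+1 -> forall u, (u, iter k (stepE E) v) \notin E.
Proof.
elim: k v => [|k IH] v hd u.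
  apply/negP => /= e; have := depth_edge Ha e; have := depth_gt0 E u; lia.
rewrite iterSr; case: (fr_step_cases v) => [e|[h ->]].
  apply: IH; have := depth_edge Ha e; lia.
by rewrite fr_iter_none.
Qed.

Lemma fr_root_noin v u : (u, rootE E v) \notin E.
Proof. by apply: fr_iter_root; have := depth_le E v; lia. Qed.

Lemma fr_iter_connect k v : connect (erel E) (iter k (stepE E) v) v.
Proof.
elim: k v => [|k IH] v; first exact: connect0.
rewrite iterSr; apply: connect_trans (IH _) _.
case: (fr_step_cases v) => [e|[_ ->]]; [exact: connect1|exact: connect0].
Qed.

Lemma fr_root_connect v : connect (erel E) (rootE E v) v.
Proof. exact: fr_iter_connect. Qed.

Lemma fr_root_edge u v : (u, v) \in E -> rootE E u = rootE E v.
Proof.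
move=> e; rewrite /rootE -(fr_step_edge e) -iterSr iterS fr_step_none //.
by move=> w; apply: fr_root_noin.
Qed.

Lemma fr_root_none v : (forall u, (u, v) \notin E) -> rootE E v = v.
Proof. exact: fr_iter_none. Qed.

End Forest.
End Gen.


Section Tree.
Variable V : finType.
Implicit Types (E F T : {set V * V}) (u v w x y : V).

Lemma path_uniq_last T r : (forall u, (u, r) \notin T) -> funin T ->
  forall q q', path (erel T) r q -> path (erel T) r q' -> last r q = last r q' -> q = q'.
Proof.
move=> hr hf q; elim/last_ind: q => [|q x IH] q'; case/lastP: q' => [|q' x'] //=.
- rewrite rcons_path last_rcons => _ /andP [_ e] eq; by rewrite /erel -eq (negbTE (hr _)) in e.
- rewrite rcons_path last_rcons => /andP [_ e] _ eq; by rewrite /erel eq (negbTE (hr _)) in e.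
rewrite !rcons_path !last_rcons => /andP [p e] /andP [p' e'] eq; subst x'.
by rewrite (IH q' p p' (hf _ _ _ e e')).
Qed.

Lemma tree_of_rank T r (f : V -> nat) :
  (forall v, v != r -> exists u, (u, v) \in T) ->
  (forall u v, (u, v) \in T -> f u < f v) ->
  funin T -> (forall u, (u, r) \notin T) ->
  ~ has_dcycle T /\ forall v, exists p, dpath T r p v /\ forall q, dpath T r q v -> q = p.
Proof.
move=> H1 H2 H3 H4; split; first exact: rank_acyclic H2.
have ex : forall n v, f v <= n -> exists p, dpath T r p v.
  elim=> [|n IH] v hv; case: (eqVneq v r) => [->|vr];
    try by exists [::]; rewrite /dpath /= ; split.
  - by case: (H1 v vr) => u e; have := H2 _ _ e; lia.
  case: (H1 v vr) => u e; have := H2 _ _ e => fu.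
  case: (IH u) => [|q [pq [uq lq]]]; first lia.
  exists (rcons q v); split; first by rewrite rcons_path pq lq.
  rewrite last_rcons; split=> //.
  rewrite -rcons_cons rcons_uniq uq andbT; apply/negP => vq.
  have := rank_path H2 pq vq; rewrite lq; lia.
move=> v; case: (ex (f v) v (leqnn _)) => p dp; exists p; split=> // q dq.
case: dp dq => [pp [_ lp]] [pq [_ lq]].
by apply: (path_uniq_last H4 H3 pq pp); rewrite lp lq.
Qed.

Lemma mem_connect T r p v : path (erel T) r p -> v \in r :: p -> connect (erel T) v (last r p).
Proof.
elim: p r v => [|x p IH] r v /=; first by move=> _; rewrite inE => /eqP ->; exact: connect0.
move=> /andP [e pp]; rewrite inE => /orP [/eqP ->|vp]; last exact: IH.
apply: connect_trans (connect1 e) _; exact: IH pp (mem_head _ _).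
Qed.

Section Spanning.
Variables (D : rel V) (T : {set V * V}) (r : V).
Hypothesis HT : spanning_rooted_tree D T r.

Lemma sp_acyc : ~ has_dcycle T.
Proof. by case: HT => _ []. Qed.

Lemma sp_root u : (u, r) \notin T.
Proof.
apply/negP => e; case: HT => _ [_ /(_ u) [q [[pq [_ lq]] _]]].
apply: sp_acyc; apply: cycle_of_connect e.
rewrite -lq; exact: mem_connect pq (mem_head _ _).
Qed.

Lemma sp_ext u v q : (u, v) \in T -> dpath T r q u -> dpath T r (rcons q v) v.
Proof.
move=> e [pq [uq lq]]; split; first by rewrite rcons_path pq lq.
rewrite last_rcons; split=> //.
rewrite -rcons_cons rcons_uniq uq andbT; apply/negP => vq.
apply: sp_acyc; apply: cycle_of_connect e; rewrite -lq; exact: mem_connect.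
Qed.

Lemma sp_funin : funin T.
Proof.
move=> a a' y e e'; case: HT => _ [_ H].
case: (H a) => q [dq _]; case: (H a') => q' [dq' _].
case: (H y) => s [_ us].
have E1 := us _ (sp_ext e dq); have E2 := us _ (sp_ext e' dq').
have : rcons q y = rcons q' y by rewrite E1 E2.
move/rcons_inj => [eq]; case: dq => [_ [_ <-]]; case: dq' => [_ [_ <-]]; by rewrite eq.
Qed.

End Spanning.
End Tree.


Section Zip.
Variable V : finType.
Implicit Types (E F T : {set V * V}) (u v w x y : V).

Lemma zip_idx (s : seq V) a b : uniq s -> (a, b) \in zip s (behead s) ->
  [/\ a \in s, b \in s & index b s = (index a s).+1].
Proof.
elim: s => [|x [|y s] IH] //=; rewrite inE => /andP [xn us].
rewrite inE => /orP [/eqP [-> ->]|e].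
  rewrite !inE !eqxx /= orbT; split=> //.
  by case: eqP xn => // ->; rewrite inE eqxx.
case: (IH us e) => ha hb hi; split; [by rewrite in_cons ha orbT|by rewrite in_cons hb orbT|].
have ax : x != a by apply: contraNneq xn => ->.
have bx : x != b by apply: contraNneq xn => ->.
rewrite [index b _]/= [index a _]/= (negbTE ax) (negbTE bx).
by move: hi => /= ->.
Qed.

Lemma zip_path T r p a b : path (erel T) r p -> (a, b) \in zip (r :: p) p -> (a, b) \in T.
Proof.
elim: p r => [|x p IH] r //= /andP [e pp]; rewrite inE => /orP [/eqP [-> ->] //|].
exact: IH.
Qed.

Lemma zip_pred r (p : seq V) b : b \in p -> exists a, (a, b) \in zip (r :: p) p.
Proof.
elim: p r => [|x p IH] r //=; rewrite inE => /orP [/eqP ->|bp].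
  by exists r; rewrite inE eqxx.
by case: (IH x bp) => a h; exists a; rewrite inE h orbT.
Qed.

Lemma index_last r (p : seq V) : uniq (r :: p) -> index (last r p) (r :: p) = size p.
Proof.
elim: p r => [|x p IH] r /=; first by rewrite eqxx.
move=> /andP [rn up]; have : last x p \in x :: p by exact: mem_last.
move=> lm; have -> : (r == last x p) = false.
  by apply/negbTE; apply: contraNneq rn => ->.
by have := IH x up => /= ->.
Qed.

Lemma idx_inj (s : seq V) a b : a \in s -> b \in s -> index a s = index b s -> a = b.
Proof. by move=> ha hb e; rewrite -(nth_index a ha) e (nth_index a hb). Qed.

End Zip.


Lemma ar1 j m iu iv : j <= m -> iv = iu.+1 -> iv <= m -> iu != j ->
  (if j < iu then iu - j - 1 else iu + m - j) < (if j < iv then iv - j - 1 else iv + m - j).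
Proof. move=> hj -> h /eqP h2; case: (ltnP j iu); case: (ltnP j iu.+1); lia. Qed.
Lemma ar2 j m : j < m ->
  (if j < m then m - j - 1 else m + m - j) < (if j < 0 then 0 - j - 1 else 0 + m - j).
Proof. by move=> h; rewrite h /=; lia. Qed.
Lemma ar3 j m i : i <= m -> j <= m -> (if j < i then i - j - 1 else i + m - j) <= m.
Proof. move=> h1 h2; case: ltnP; lia. Qed.

Section Part1.
Variable V : finType.
Variables (D : rel V) (c c' : V) (T : {set V * V}) (r : V) (p : seq V).
Hypothesis Hcc : c != c'.
Hypothesis Hcs : complete_source D c.
Hypothesis HT : spanning_rooted_tree D T r.
Hypothesis Hl : is_leaf T c.
Hypothesis Hp : dpath T r p c.
Local Notation s := (r :: p).

Lemma rc : r != c.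
Proof.
apply/eqP => erc; case: HT => _ [_ /(_ c') [q [[pq [_ lq]] _]]].
case: q pq lq => [|x q] /=; first by move=> _ e; move: Hcc; rewrite -e erc eqxx.
move=> /andP [e _] _; by move: (Hl x); rewrite -erc /erel in e *; rewrite e.
Qed.

Lemma sigma_cases e : e \in sigmaT r p c ->
  [/\ e.1 \in r :: p, e.2 \in r :: p &
     (index e.2 (r :: p) = (index e.1 (r :: p)).+1) \/ e = (c, r)].
Proof.
case: Hp => pp [up lp].
have cin : c \in r :: p by rewrite -lp mem_last.
rewrite /sigmaT !inE => /orP [ez|/eqP ->].
  case: e ez => a b ez; case: (zip_idx up ez) => ha hb hi; split=> //; by left.
by split; [exact: cin|exact: mem_head|right].
Qed.

Lemma sigma_cases2 a b : (a, b) \in sigmaT r p c ->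
  [/\ a \in r :: p, b \in r :: p &
     (index b (r :: p) = (index a (r :: p)).+1) \/ (a = c /\ b = r)].
Proof.
move/sigma_cases => [h1 h2 [h|e]]; split=> //; [by left|right].
by case: e.
Qed.

Lemma part1 F : S_face T r p c F -> directed_forest D F.
Proof.
case=> A [/properP [sA [e0 e0s e0A]] [b ->]].
case: Hp => pp [up lp].
have cin : c \in s by rewrite -lp mem_last.
have ic : index c s = size p by rewrite -lp index_last.
have ir : index r s = 0 by rewrite /= eqxx.
have bnd : forall v, v \in s -> index v s <= size p.
  by move=> v; rewrite -index_mem /= ltnS.
have inA : forall e, e \in A -> e \in sigmaT r p c by apply/subsetP.
have Tf := sp_funin HT.
have Ta := sp_acyc HT.
set Bs := [set e : V * V | _].
have inF : forall e, e \in A :|: Bs -> e \in A \/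
   [/\ e.2 \notin s, b e.2 = Some true & e \in T] \/ [/\ e.2 \notin s, b e.2 = Some false & e.1 = c].
  move=> e; rewrite in_setU => /orP [->|]; first by left.
  rewrite inE; case/andP => he; case: (b e.2) => [[]|] // h; right; [left|right]; split=> //.
  exact/eqP.
split.
-
  apply/subsetP => e /inF [/inA es| [[_ _ eT]|[hn _ e1]]].
  + rewrite /sigmaT !inE in es; case/orP: es => [ez|/eqP ->].
      case: e ez => a b' ez; rewrite inE /=; have := zip_path pp ez.
      by case: HT => /subsetP sT _ /sT; rewrite inE.
    by rewrite inE /=; apply: Hcs; exact: rc.
  + by case: HT => /subsetP sT _; apply: sT.
  + case: e hn e1 => a y /= hn ->; rewrite inE /=; apply: Hcs.
    by apply: contraNneq hn => ->.
split.
-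
  apply: funin_card => a a' y ha ha'.
  case: (boolP (y \in s)) => ys.
    have inS : forall a, (a, y) \in A :|: Bs -> (a, y) \in sigmaT r p c.
      by move=> x /inF [/inA //|[[hn _ _]|[hn _ _]]]; rewrite ys in hn.
    case: (sigma_cases2 (inS _ ha)) => h1 _ [hi|e]; case: (sigma_cases2 (inS _ ha')) => h1' _ [hi'|e'].
    - by apply: (idx_inj h1 h1'); rewrite hi in hi'; case: hi'.
    - by case: e' hi => -> -> /=; rewrite eqxx.
    - by case: e hi' => -> -> /=; rewrite eqxx.
    - by case: e e' => -> _ [->].
  have inB : forall x, (x, y) \in A :|: Bs -> (b y = Some true /\ (x, y) \in T) \/ (b y = Some false /\ x = c).
    move=> x /inF [/inA /sigma_cases [_ h _]|[[_ hb hT]|[_ hb h1]]]; first by rewrite h in ys.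
      by left. by right.
  case: (inB _ ha) => [[hb hT]|[hb ->]]; case: (inB _ ha') => [[hb' hT']|[hb' ->]] //;
    try congruence.
  exact: Tf hT hT'.
-
  set j := index e0.1 s.
  have j_le : j <= size p by apply: bnd; case: (sigma_cases e0s).
  pose f v := if v \in s then (if j < index v s then index v s - j - 1 else index v s + size p - j)
              else (size p).+1 + depth T v.
  have fs : forall v, v \in s -> f v <= size p.
    move=> v vs; rewrite /f vs; exact: ar3 (bnd v vs) j_le.
  apply: (@rank_acyclic _ _ f) => u v /inF [eA|[[hn _ eT]|[hn _ e1]]].
  + have es := inA _ eA.
    case: (sigma_cases2 es) => us vs [hi|[eu ev]].
      have uj : index u s != j.
        apply/eqP => iu; have eu : u = e0.1 by apply: (idx_inj us _ iu); case: (sigma_cases e0s).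
        case: (sigma_cases e0s) => h1 h2 [hi0|ec].
          have ev : v = e0.2 by apply: (idx_inj vs h2); rewrite hi hi0 iu.
          by move: e0A; rewrite [e0]surjective_pairing -eu -ev eA.
        by move: (bnd v vs); rewrite hi iu /j ec [(c, r).1]/= ic ltnn.
      rewrite /f us vs; exact: ar1 j_le hi (bnd v vs) uj.
    have e0z : (index e0.2 s = j.+1).
      case: (sigma_cases e0s) => _ _ [//|ec]; by move: e0A; rewrite ec -eu -ev eA.
    have jp : j < size p by rewrite -ltnS -e0z; apply: bnd; case: (sigma_cases e0s).
    rewrite /f us vs eu ev ic ir; exact: ar2.
  + rewrite /f (negbTE hn); case: ifP => us.
      have := fs u us; rewrite /f us => h; apply: leq_ltn_trans h _; exact: leq_addr.
    by rewrite ltn_add2l; apply: depth_edge Ta eT.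
  + have eu : u = c := e1; rewrite /f (negbTE hn) eu cin; have := fs c cin; rewrite /f cin => h.
    apply: leq_ltn_trans h _; exact: leq_addr.
Qed.

End Part1.


Section OnPath.
Variable V : finType.
Lemma onpath (T : {set V * V}) r p c u : (forall u, (u, r) \notin T) -> funin T ->
  dpath T r p c -> connect (erel T) u c -> u \in r :: p.
Proof.
move=> H4 H3 [pp [up lp]] /connectP [q pq ec].
elim: q u pq ec => [|x q IH] u /=; first by move=> _ <-; rewrite -lp mem_last.
move=> /andP [e pq] ec; have xs := IH x pq ec.
have xr : x != r by apply: contraNneq (H4 u) => <-.
have xp : x \in p by move: xs; rewrite in_cons (negbTE xr).
case: (zip_pred r xp) => a z; have aT := zip_path pp z.
rewrite -(H3 _ _ _ aT e); by case: (zip_idx up z).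
Qed.
End OnPath.

Section Part2.
Variable V : finType.
Variables (D : rel V) (c c' : V) (F : {set V * V}).
Hypothesis Hirr : forall x, ~~ D x x.
Hypothesis Hcc : c != c'.
Hypothesis Hcs' : complete_source D c'.
Hypothesis HF : directed_forest D F.

Definition F' := [set e in F | e.1 != c].
Definition rt := rootE F' c'.
Definition nopar v := [forall u, (u, v) \notin F'].
Definition TT := [set e : V * V | (e.2 != rt) && ((e \in F') || ((e.1 == c') && nopar e.2))].

Lemma Ff : funin F. Proof. by case: HF => _ [h _]; apply: card_funin. Qed.
Lemma Fa : ~ has_dcycle F. Proof. by case: HF => _ []. Qed.
Lemma F'sub : F' \subset F. Proof. by apply/subsetP => e; rewrite inE => /andP []. Qed.
Lemma F'f : funin F'. Proof. exact: sub_funin F'sub Ff. Qed.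
Lemma F'a : ~ has_dcycle F'. Proof. by move=> h; apply: Fa; apply: sub_dcycle F'sub h. Qed.
Lemma inF' u v : ((u, v) \in F') = ((u, v) \in F) && (u != c).
Proof. by rewrite inE. Qed.

Lemma noparP v : reflect (forall u, (u, v) \notin F') (nopar v).
Proof. exact: forallP. Qed.

Lemma rt_noin u : (u, rt) \notin F'.
Proof. exact: (fr_root_noin F'a c' u). Qed.

Lemma Tcases u v : (u, v) \in TT -> v != rt /\ ((u, v) \in F' \/ (u = c' /\ nopar v)).
Proof.
rewrite inE /= => /andP [vr /orP [h|/andP [/eqP -> h]]]; split=> //; by [left|right].
Qed.

Lemma F'T u v : (u, v) \in F' -> (u, v) \in TT.
Proof.
move=> e; rewrite inE /= e andbT; apply: contraNneq (rt_noin u) => <-; exact: e.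
Qed.

Lemma root_c' : rootE F' c' = rt. Proof. by []. Qed.

Lemma nopar_neq v : nopar v -> v != rt -> v != c'.
Proof.
move=> /noparP h vr; apply/eqP => vc; move: vr; by rewrite /rt -vc fr_root_none // eqxx.
Qed.

Lemma TT_span : spanning_rooted_tree D TT rt.
Proof.
split.
  apply/subsetP => [[u v]] /Tcases [vr [e|[-> np]]]; rewrite inE /=.
    by case: HF => /subsetP s _; move: (s _ (subsetP F'sub _ e)); rewrite inE.
  apply: Hcs'; exact: nopar_neq.
pose f v := if rootE F' v == rt then depth F' v else depth F' v + depth F' c'.
apply: (@tree_of_rank _ TT rt f).
- move=> v vr; case: (boolP (nopar v)) => np.
    by exists c'; rewrite inE /= vr eqxx np orbT.
  move: np; rewrite /nopar negb_forall => /existsP [u]; rewrite negbK => e.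
  by exists u; apply: F'T.
- move=> u v /Tcases [vr [e|[-> np]]].
    rewrite /f (fr_root_edge F'f F'a e); have := depth_edge F'a e.
    by case: ifP => _ // h; rewrite ltn_add2r.
  rewrite /f root_c' eqxx fr_root_none; last by apply/noparP.
  rewrite (negbTE vr) -{1}(add0n (depth F' c')) ltn_add2r; exact: depth_gt0.
- move=> a a' y /Tcases [_ [e|[-> np]]] /Tcases [_ [e'|[-> np']]] //.
  + exact: F'f e e'.
  + by move/noparP: np' => /(_ a); rewrite e.
  + by move/noparP: np => /(_ a'); rewrite e'.
- by move=> u; rewrite inE /= eqxx.
Qed.

Lemma TT_leaf : is_leaf TT c.
Proof.
move=> y; apply/negP => /Tcases [_ [e|[e _]]]; first by rewrite inF' eqxx andbF in e.
by move: Hcc; rewrite e eqxx.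
Qed.

Definition rho := rootE F' c.

Lemma Fsub_conn : forall x y, connect (erel F') x y -> connect (erel F) x y.
Proof.
apply: connect_sub => x y e; apply: connect1; exact: (subsetP F'sub _ e).
Qed.

Lemma rho_nopF u : (u, rho) \notin F.
Proof.
apply/negP => e; case: (eqVneq u c) => [uc|uc].
  subst u; apply: Fa; apply: cycle_of_connect e.
  apply: Fsub_conn.
  exact: (fr_root_connect F' c).
by move: (fr_root_noin F'a c u); rewrite inF' e uc.
Qed.

Lemma invariant v w : nopar v -> v != rt -> connect (erel TT) v w -> rootE F' w = v.
Proof.
move=> np vr /connectP [q pq ->].
have gen : forall q x, path (erel TT) x q -> rootE F' x = v -> rootE F' (last x q) = v.
  elim=> [|y q' IH] x //= /andP [e pq'] hx; apply: IH pq' _.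
  case: (Tcases e) => _ [e'|[ex _]].
    by rewrite -(fr_root_edge F'f F'a e').
  by move: hx vr; rewrite ex root_c' => ->; rewrite eqxx.
apply: gen pq _; apply: fr_root_none; exact/noparP.
Qed.

Definition bb v := if [pick u | (u, v) \in F] is Some u then Some (u != c) else None.

Lemma bbF u v : (u, v) \in F -> bb v = Some (u != c).
Proof. by rewrite /bb; case: pickP => [u' /= e' e|/(_ u) /= -> //]; rewrite (Ff e' e). Qed.

Lemma bbS v x : bb v = Some x -> exists u, (u, v) \in F /\ x = (u != c).
Proof. by rewrite /bb; case: pickP => [u /= e [<-]|//]; exists u. Qed.

Lemma part2 : exists (T : {set V * V}) (r : V) (p : seq V),
       [/\ spanning_rooted_tree D T r, is_leaf T c, dpath T r p c
         & S_face T r p c F].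
Proof.
have HT := TT_span.
case: (HT) => _ [_ /(_ c) [p [dp _]]].
exists TT, rt, p; split=> //; first exact: TT_leaf.
have Tf := sp_funin HT; have Tr := sp_root HT.
case: (dp) => pp [up lp].
have cin : c \in rt :: p by rewrite -lp mem_last.
have inSig : forall u v, (u, v) \in F -> v \in rt :: p -> (u, v) \in sigmaT rt p c.
  move=> u v e vs; case: (eqVneq v rt) => [ev|vr].
    have uc : u = c.
      apply/eqP; apply: contraT => uc; move: (rt_noin u).
      by rewrite inF' uc andbT -ev e.
    by rewrite /sigmaT !inE uc ev eqxx orbT.
  have vp : v \in p by move: vs; rewrite in_cons (negbTE vr).
  case: (zip_pred rt vp) => a z; have aT := zip_path pp z.
  case: (eqVneq u c) => [uc|uc].
    subst u; exfalso.
    have np : nopar v.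
      apply/noparP => w; rewrite inF'; apply/negP => /andP [e' wc].
      by move: wc; rewrite (Ff e' e) eqxx.
    have cvc : connect (erel TT) v c by rewrite -lp; exact: mem_connect.
    have hr := invariant np vr cvc.
    by move: (rho_nopF c); rewrite /rho hr e.
  have e' : (u, v) \in F' by rewrite inF' e uc.
  have := Tf _ _ _ aT (F'T e') => au; subst a.
  by rewrite /sigmaT !inE z.
exists (F :&: sigmaT rt p c); split.
  apply/properP; split; first exact: subsetIr.
  case: (boolP ((c, rt) \in F)) => crF; last first.
    by exists (c, rt); [rewrite /sigmaT !inE eqxx orbT|rewrite inE (negbTE crF)].
  have rr : rho != rt by apply: contraNneq (rho_nopF c) => ->.
  have cr : connect (erel TT) rho c.
    apply: (connect_sub (e' := erel TT)) (fr_root_connect F' c) => x y e.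
    by apply: connect1; apply: F'T.
  have := onpath Tr Tf dp cr; rewrite in_cons (negbTE rr) /= => rp.
  case: (zip_pred rt rp) => a z; have aT := zip_path pp z.
  case: (Tcases aT) => _ [e|[ac _]].
    by move: (rho_nopF a); rewrite (subsetP F'sub _ e).
  subst a; exists (c', rho); first by rewrite /sigmaT !inE z.
  by rewrite inE (negbTE (rho_nopF c')).
exists bb; apply/setP => [[u v]]; rewrite in_setU in_setI.
set Bs := [set e : V * V | _].
rewrite [(u, v) \in Bs]inE [(u, v).2]/= [(u, v).1]/=.
apply/idP/idP.
- move=> e; case: (boolP (v \in rt :: p)) => vs.
    by rewrite e (inSig _ _ e vs).
  rewrite (bbF e); case: (eqVneq u c) => [uc|uc] /=; first by rewrite orbT.
  rewrite orbC /= (F'T (_ : (u, v) \in F')) //; by rewrite inF' e uc.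
- case/orP => [/andP [] //|/andP [vs]].
  case h: (bb v) => [[]|] //; case: (bbS h) => u0 [e0 x].
    move=> /Tcases [_ [e|[uc np]]]; first exact: (subsetP F'sub _ e).
    by move/noparP: np => /(_ u0); rewrite inF' e0 -x.
  have uc : u0 = c by move: x; case: (eqVneq u0 c).
  by move=> /eqP ->; rewrite -uc.
Qed.

End Part2.

Theorem mainTheorem3 (V : finType) (D : rel V) (c c' : V) :
  (forall x : V, ~~ D x x) ->
  c != c' -> complete_source D c -> complete_source D c' ->
  (forall (T : {set V * V}) (r : V) (p : seq V),
     spanning_rooted_tree D T r -> is_leaf T c -> dpath T r p c ->
     forall F : {set V * V}, S_face T r p c F -> directed_forest D F) /\
  (forall F : {set V * V},
     directed_forest D F <->
     exists (T : {set V * V}) (r : V) (p : seq V),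
       [/\ spanning_rooted_tree D T r, is_leaf T c, dpath T r p c
         & S_face T r p c F]).
Proof.
move=> Hirr Hcc Hcs Hcs'; split.
  by move=> T r p HT Hl Hp F; apply: (part1 Hcc Hcs HT Hl Hp).
move=> F; split; first exact: part2 Hcc Hcs'.
by case=> T [r [p [HT Hl Hp HS]]]; apply: (part1 Hcc Hcs HT Hl Hp).
Qed.
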